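(* Let $n\ge 2$ and let $(x_1,\dots,x_n)\in A_n$ be a point at which $S_n$ attains its maximum over $A_n$. Then $x_1-x_2\le 1$.
   Context: For an integer $n\ge 2$, $A_n$ is the set of integer vectors $(x_1,\dots,x_n)\in\mathbb{Z}^n$ such that $n\ge x_1\ge x_2\ge\cdots\ge x_n\ge 0$, $\sum_{i=1}^k x_i\le 2n+6k-16$ for every $k\in\{1,\dots,n\}$, and $\sum_{i=1}^n x_i\le 6n-12$. For an integer $m\ge 2$, $S_m:\mathbb{R}^m\to\mathbb{R}$ is defined by $S_m(x_1,\dots,x_m)=\sum_{i=1}^{m-1}\sum_{j=i+1}^{m} x_i x_j^2$. *)

(* Defs.v *)
From mathcomp Require Import all_boot all_order all_algebra.
Set Implicit Arguments. Unset Strict Implicit. Unset Printing Implicit Defensive.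
Import Order.TTheory GRing.Theory Num.Theory.
Local Open Scope ring_scope.

(* Vectors (x_1,...,x_n) are represented by functions x : nat -> int,
   1-indexed; only the values x 1, ..., x n matter. *)

Definition inA (n : nat) (x : nat -> int) : Prop :=
  [/\ x 1%N <= n%:Z,
      (forall i : nat, (1 <= i < n)%N -> x i.+1 <= x i),
      0 <= x n,
      (forall k : nat, (1 <= k <= n)%N ->
         \sum_(1 <= i < k.+1) x i <= 2 * n%:Z + 6 * k%:Z - 16)
    & \sum_(1 <= i < n.+1) x i <= 6 * n%:Z - 12].

Definition S (m : nat) (x : nat -> int) : int :=
  \sum_(1 <= i < m) \sum_(i.+1 <= j < m.+1) x i * x j ^+ 2.

(* Main.v *)
Require Import Defs.
From mathcomp Require Import all_boot all_order all_algebra zify ring lra.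
Import Order.TTheory GRing.Theory Num.Theory.
Local Open Scope ring_scope.

Definition Tl (n : nat) (x : nat -> int) := \sum_(3 <= j < n.+1) x j ^+ 2.
Definition Rl (n : nat) (x : nat -> int) :=
  \sum_(3 <= i < n) \sum_(i.+1 <= j < n.+1) x i * x j ^+ 2.

Lemma bltn (a b : nat) (F : nat -> int) : (a < b)%N ->
  \sum_(a <= i < b) F i = F a + \sum_(a.+1 <= i < b) F i.
Proof. exact: big_ltn. Qed.

Lemma S_dec (m : nat) (x : nat -> int) :
  S m.+2 x = x 1%N * x 2%N ^+ 2 + (x 1%N + x 2%N) * Tl m.+2 x + Rl m.+2 x.
Proof.
rewrite /S /Tl /Rl.
case: m => [|m].
  rewrite (@bltn 1%N 2%N) // [X in X + _ = _]bltn //.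
  by rewrite !big_geq // !mulr0 !addr0.
rewrite (@bltn 1%N m.+3) // [X in X + _ = _]bltn //.
rewrite [X in _ + X = _]bltn // -!mulr_sumr.
ring.
Qed.

Lemma psum (x y : nat -> int) (k : nat) : (2 <= k)%N ->
  x 1%N + x 2%N = y 1%N + y 2%N -> (forall i, (3 <= i)%N -> x i = y i) ->
  \sum_(1 <= i < k.+1) x i = \sum_(1 <= i < k.+1) y i.
Proof.
move=> hk h12 hi.
have h1 : (1 < k.+1)%N by lia. have h2 : (2 < k.+1)%N by lia.
rewrite (@bltn 1 k.+1 x) // (@bltn 2 k.+1 x) // (@bltn 1 k.+1 y) // (@bltn 2 k.+1 y) //.
rewrite !addrA h12; congr (_ + _).
apply: eq_big_nat => i /andP [h _]; exact: hi.
Qed.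

Lemma x2_ge0 (n : nat) (x : nat -> int) : (2 <= n)%N -> inA n x -> 0 <= x 2%N.
Proof.
move=> hn [_ hmon hxn _ _].
have H : forall d, (d + 2 <= n)%N -> x n <= x (n - d)%N.
  elim=> [|d IH] hd; first by rewrite subn0.
  apply: (le_trans (IH (ltnW hd))).
  have := hmon (n - d.+1)%N. have -> : (n - d.+1).+1 = (n - d)%N by lia.
  apply; lia.
have := H (n - 2)%N. have -> : (n - (n - 2))%N = 2%N by lia.
move=> h; apply: (le_trans hxn); apply: h; lia.
Qed.

Theorem lemma6 (n : nat) (x : nat -> int) :
  (2 <= n)%N ->
  inA n x ->
  (forall y : nat -> int, inA n y -> S n y <= S n x) ->
  x 1%N - x 2%N <= 1.
Proof.
move=> hn hA hmax.
rewrite leNgt; apply/negP => hd.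
have hd2 : 2 <= x 1%N - x 2%N by [].
have hx2 := @x2_ge0 n x hn hA.
set y : nat -> int := fun i => if i == 1%N then x 1%N - 1
  else if i == 2%N then x 2%N + 1 else x i.
have y1 : y 1%N = x 1%N - 1 by [].
have y2 : y 2%N = x 2%N + 1 by [].
have yi : forall i, (3 <= i)%N -> y i = x i.
  by move=> [|[|[|i]]].
clearbody y.
case: hA => [h1 hmon hxn hpre htot].
have hyA : inA n y.
  split.
  - rewrite y1; lra.
  - move=> [|[|[|i]]] hi //.
    + rewrite y2 y1; lra.
    + rewrite (yi 3%N) // y2. apply: (le_trans (hmon 2%N hi)); lra.
    + by rewrite (yi i.+4) // (yi i.+3) //; apply: hmon.
  - case: n hn hmax hxn hpre htot {hmon h1} => [|[|[|n]]] // _ _ hxn _ _.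
    + rewrite y2; lra.
    + by rewrite yi.
  - move=> [|[|k]] hk //.
    + rewrite big_nat1 y1; have := hpre 1%N hk; rewrite big_nat1; lra.
    + rewrite (@psum y x) //; [exact: hpre | rewrite y1 y2; ring].
  - rewrite (@psum y x) //; rewrite y1 y2; ring.
have := hmax y hyA.
case: n hn {hpre htot hmax hmon h1 hxn hyA} => [|[|m]] // _.
rewrite !S_dec y1 y2.
have -> : Tl m.+2 y = Tl m.+2 x.
  by apply: eq_big_nat => i /andP [h _]; rewrite yi.
have -> : Rl m.+2 y = Rl m.+2 x.
  apply: eq_big_nat => i /andP [h _]; rewrite yi //.
  apply: eq_big_nat => j /andP [h' _]; rewrite yi //; lia.
move: (Tl m.+2 x) (Rl m.+2 x) => T R.
rewrite leNgt => /negP; apply.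
set a := x 1%N; set b := x 2%N.
move: hd2 hx2; rewrite -/a -/b => hd2 hx2.
nia.
Qed.
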